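(* Let $\sum_{n=1}^{\infty}x_n$ be a conditionally convergent series of real numbers. Then for any $a,b\in\mathbb{R}$ with $a<b$ there exists a strictly increasing sequence of indices $(k_n)_{n=1}^{\infty}$ such that the subseries $\sum_{n=1}^{\infty}x_{k_n}$ is absolutely convergent and its achievement set $A(x_{k_n})$ contains the interval $[a,b]$.
   Context: For a real sequence $(y_n)$, its achievement set is $A(y_n)=\{\sum_{n\in A}y_n : A\subseteq\mathbb{N}\}$ (only sets $A$ for which the sum converges are taken; for an absolutely convergent series this is every $A$). *)

(* Defs.v *)
From Stdlib Require Import Reals.
Open Scope R_scope.

Definition series_converges (x : nat -> R) : Prop :=
  exists l : R, infinite_sum x l.

Definition abs_convergent (x : nat -> R) : Prop :=
  series_converges (fun n => Rabs (x n)).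

Definition cond_convergent (x : nat -> R) : Prop :=
  series_converges x /\ ~ abs_convergent x.

(* Achievement set: t is in A(y) iff t = sum_{n in A} y n for some A ⊆ N
   for which this sum converges.  A subset A is encoded by its indicator. *)
Definition achievement_set (y : nat -> R) (t : R) : Prop :=
  exists A : nat -> bool,
    infinite_sum (fun n => if A n then y n else 0) t.

Definition strictly_increasing (k : nat -> nat) : Prop :=
  forall n m : nat, (n < m)%nat -> (k n < k m)%nat.

(* Main.v *)
Require Import Defs.
From Stdlib Require Import Reals.
From Stdlib Require Import Lra Lia Wf_nat Classical ClassicalEpsilon.
Open Scope R_scope.

Lemma Un_cv_ext u v l : (forall n, u n = v n) -> Un_cv u l -> Un_cv v l.
Proof. intros H Hu eps He; destruct (Hu eps He) as [N HN]; exists N; intros n Hn; rewrite <- H; auto. Qed.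

Lemma sum_ext f g : (forall m, f m = g m) -> forall n, sum_f_R0 f n = sum_f_R0 g n.
Proof. intros H n; induction n; simpl; rewrite ?IHn, H; reflexivity. Qed.

Lemma isum_ext f g l : (forall m, f m = g m) -> infinite_sum f l -> infinite_sum g l.
Proof. intros H; apply Un_cv_ext; apply sum_ext; auto. Qed.

Lemma cv_const c : Un_cv (fun _ => c) c.
Proof. intros eps He; exists O; intros n _; unfold Rdist; replace (c - c) with 0 by ring; rewrite Rabs_R0; lra. Qed.

Lemma cv_shift u l : Un_cv u l -> Un_cv (fun n => u (S n)) l.
Proof. intros H eps He; destruct (H eps He) as [N HN]; exists N; intros n Hn; apply HN; lia. Qed.

Lemma terms_zero y l : infinite_sum y l -> forall eps, eps > 0 -> exists N, forall n, (n >= N)%nat -> Rabs (y n) < eps.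
Proof.
  intros H eps He. destruct (H (eps/2)) as [N HN]; [lra|].
  exists (S N). intros n Hn. destruct n as [|n]; [lia|].
  pose proof (HN (S n) ltac:(lia)) as H1. pose proof (HN n ltac:(lia)) as H2.
  unfold Rdist in *. simpl in H1.
  apply Rabs_def2 in H1. apply Rabs_def2 in H2. apply Rabs_def1; lra.
Qed.

Fixpoint enumk (f : nat -> nat) (n : nat) : nat :=
  match n with O => f O | S n' => f (S (enumk f n')) end.

Lemma enum (I : nat -> bool) :
  (forall m, exists j, (m <= j)%nat /\ I j = true) ->
  exists k : nat -> nat, strictly_increasing k /\
    (forall g l, infinite_sum (fun m => if I m then g m else 0) l ->
                 infinite_sum (fun n => g (k n)) l).
Proof.
  intros Hinf.
  assert (Hl : forall m, exists j, ((m <= j)%nat /\ I j = true) /\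
     forall j', (m <= j')%nat /\ I j' = true -> (j <= j')%nat).
  { intros m. destruct (dec_inh_nat_subset_has_unique_least_element
      (fun j => (m <= j)%nat /\ I j = true)) as [j [Hj _]].
    - intros n. destruct (Compare_dec.le_dec m n); destruct (I n); intuition (try discriminate).
    - apply Hinf.
    - exists j; exact Hj. }
  pose (f := fun m => proj1_sig (constructive_indefinite_description _ (Hl m))).
  assert (Hf : forall m, ((m <= f m)%nat /\ I (f m) = true) /\
     forall j', (m <= j')%nat /\ I j' = true -> (f m <= j')%nat).
  { intros m. unfold f. destruct (constructive_indefinite_description _ (Hl m)); simpl; auto. }
  assert (Hgap : forall m j, (m <= j)%nat -> (j < f m)%nat -> I j = false).
  { intros m j H1 H2. destruct (I j) eqn:E; auto.
    destruct (Hf m) as [_ H]. specialize (H j (conj H1 E)). lia. }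
  set (k := enumk f).
  assert (Hks : forall n, (k n < k (S n))%nat).
  { intros n. simpl. destruct (Hf (S (k n))) as [[H _] _]. unfold k in *; simpl; lia. }
  assert (Hinc : strictly_increasing k).
  { intros n m Hnm. induction m; [lia|].
    destruct (Nat.eq_dec n m) as [->|Hne]; [apply Hks|].
    specialize (Hks m); specialize (IHm ltac:(lia)); lia. }
  assert (Hkn : forall n, (n <= k n)%nat).
  { induction n; [lia|]. specialize (Hks n); lia. }
  exists k; split; auto.
  intros g l Hs.
  set (mg := fun m => if I m then g m else 0).
  assert (L0 : forall d, (forall i, (i <= d)%nat -> I i = false) -> sum_f_R0 mg d = 0).
  { induction d; intros H; simpl.
    - unfold mg; rewrite H; auto.
    - rewrite IHd by (intros; apply H; lia). unfold mg; rewrite H; auto; ring. }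
  assert (L1 : forall p d, (forall i, (p < i <= p + d)%nat -> I i = false) ->
             sum_f_R0 mg (p + d) = sum_f_R0 mg p).
  { intros p; induction d; intros H.
    - rewrite Nat.add_0_r; auto.
    - rewrite Nat.add_succ_r; simpl. rewrite IHd by (intros; apply H; lia).
      unfold mg at 2; rewrite H by lia; ring. }
  assert (Key : forall n, sum_f_R0 mg (k n) = sum_f_R0 (fun n => g (k n)) n).
  { induction n.
    - simpl. assert (HI : I (k O) = true) by (destruct (Hf O) as [[_ H] _]; exact H).
      assert (Hb : forall i, (i < k O)%nat -> I i = false) by (intros; apply (Hgap O); unfold k in *; simpl in *; lia).
      destruct (k O) as [|d] eqn:E.
      + simpl; unfold mg; rewrite HI; auto.
      + simpl. rewrite L0 by (intros; apply Hb; lia). unfold mg; rewrite HI; ring.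
    - simpl sum_f_R0 at 2. rewrite <- IHn.
      assert (HI : I (k (S n)) = true) by (destruct (Hf (S (k n))) as [[_ H] _]; exact H).
      assert (Hb : forall i, (k n < i < k (S n))%nat -> I i = false)
        by (intros; apply (Hgap (S (k n))); unfold k in *; simpl in *; lia).
      specialize (Hks n).
      replace (k (S n)) with (S (k n + (k (S n) - S (k n)))) by lia.
      simpl. rewrite L1 by (intros; apply Hb; lia).
      replace (S (k n + (k (S n) - S (k n)))) with (k (S n)) by lia.
      unfold mg at 2; rewrite HI; reflexivity. }
  intros eps He. destruct (Hs eps He) as [N HN]. exists N. intros n Hn.
  rewrite <- Key. apply HN. specialize (Hkn n); lia.
Qed.

Fixpoint dd (w : nat -> R) (t : R) (m : nat) : R :=
  match m with
  | O => t
  | S m' => let d := dd w t m' in if Rle_dec (w m') d then d - w m' else d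
  end.

Lemma greedy (w Rt : nat -> R) t :
  (forall m, 0 <= w m) -> (forall m, Rt m = w m + Rt (S m)) -> Un_cv Rt 0 ->
  (forall m, w m <= Rt (S m)) -> 0 <= t <= Rt O ->
  exists B : nat -> bool, infinite_sum (fun m => if B m then w m else 0) t.
Proof.
  intros Hw HR Hcv Htl Ht.
  exists (fun m => if Rle_dec (w m) (dd w t m) then true else false).
  assert (Inv : forall m, 0 <= dd w t m <= Rt m).
  { induction m; simpl; auto.
    specialize (HR m); specialize (Htl m).
    destruct (Rle_dec (w m) (dd w t m)); lra. }
  assert (Ps : forall n, sum_f_R0 (fun m => if (if Rle_dec (w m) (dd w t m) then true else false)
                then w m else 0) n = t - dd w t (S n)).
  { induction n; simpl.
    - destruct (Rle_dec (w 0%nat) t); ring.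
    - rewrite IHn. simpl. destruct (Rle_dec (w (S n)) _); ring. }
  intros eps He. destruct (Hcv eps He) as [N HN]. exists N. intros n Hn.
  rewrite Ps. specialize (HN (S n) ltac:(lia)). specialize (Inv (S n)).
  unfold Rdist in *. replace (t - dd w t (S n) - t) with (- dd w t (S n)) by ring.
  rewrite Rabs_Ropp, Rabs_right by lra. rewrite Rminus_0_r in HN.
  rewrite Rabs_right in HN by lra. lra.
Qed.

Definition cnd (C : R) (y : nat -> R) (m : nat) (p : R) : bool :=
  if Rlt_dec 0 (y m) then (if Rle_dec (y m) ((C - p) / 2) then true else false) else false.

Lemma cnd_true C y m p : cnd C y m p = true -> 0 < y m /\ y m <= (C - p) / 2.
Proof. unfold cnd; destruct (Rlt_dec 0 (y m)); [destruct (Rle_dec (y m) ((C - p)/2))|]; intros H; try discriminate; auto. Qed.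

Lemma cnd_intro C y m p : 0 < y m -> y m <= (C - p) / 2 -> cnd C y m p = true.
Proof. unfold cnd; destruct (Rlt_dec 0 (y m)); [destruct (Rle_dec (y m) ((C - p)/2))|]; intros; auto; lra. Qed.

Fixpoint Pf (C : R) (y : nat -> R) (m : nat) : R :=
  match m with
  | O => 0
  | S m' => Pf C y m' + (if cnd C y m' (Pf C y m') then y m' else 0)
  end.

Lemma Pf_bnd C y : 0 < C -> forall m, 0 <= Pf C y m < C.
Proof.
  intros HC m; induction m; simpl; [lra|].
  destruct (cnd C y m (Pf C y m)) eqn:E; [apply cnd_true in E|]; lra.
Qed.

Lemma Pf_step C y m : Pf C y m <= Pf C y (S m).
Proof. simpl. destruct (cnd C y m (Pf C y m)) eqn:E; [apply cnd_true in E|]; lra. Qed.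

Lemma Pf_mono C y m d : Pf C y m <= Pf C y (m + d).
Proof. induction d; [rewrite Nat.add_0_r; lra|]. rewrite Nat.add_succ_r. pose proof (Pf_step C y (m + d)); lra. Qed.

Lemma Pf_tail C y m : cnd C y m (Pf C y m) = true -> y m <= C - Pf C y (S m).
Proof. intros E. simpl. rewrite E. apply cnd_true in E. lra. Qed.

Lemma abs_pos a : Rabs a = Rmax 0 a + Rmax 0 a - a.
Proof.
  destruct (Rle_dec 0 a).
  - rewrite Rabs_right, Rmax_right; lra.
  - rewrite Rabs_left1, Rmax_left; lra.
Qed.

Lemma Pf_lim C y : 0 < C -> cond_convergent y -> Un_cv (Pf C y) C.
Proof.
  intros HC [[ly Hly] Hna] eps He.
  destruct (classic (exists m, C - eps < Pf C y m)) as [[m Hm] | Hno].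
  - exists m. intros n Hn. pose proof (Pf_mono C y m (n - m)).
    replace (m + (n - m))%nat with n in H by lia. pose proof (Pf_bnd C y HC n).
    unfold Rdist. rewrite Rabs_left1 by lra. lra.
  - exfalso. apply Hna.
    assert (Hb : forall m, Pf C y m <= C - eps).
    { intros m. apply Rnot_lt_le. intros H; apply Hno; eauto. }
    destruct (terms_zero y ly Hly (eps/2)) as [N HN]; [lra|].
    set (pos := fun m => Rmax 0 (y m)).
    assert (Hst : forall m, (m >= N)%nat -> Pf C y (S m) = Pf C y m + pos m).
    { intros m Hm. simpl. unfold pos. destruct (cnd C y m (Pf C y m)) eqn:E.
      - apply cnd_true in E. rewrite Rmax_right; lra.
      - destruct (Rlt_dec 0 (y m)).
        + specialize (HN m Hm). apply Rabs_def2 in HN. specialize (Hb m).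
          rewrite cnd_intro in E; [discriminate| lra | lra].
        + rewrite Rmax_left; lra. }
    set (Sp := sum_f_R0 pos).
    assert (Hd : forall d, Sp (N + d)%nat = Sp N + Pf C y (S (N + d)) - Pf C y (S N)).
    { induction d.
      - rewrite Nat.add_0_r; ring.
      - rewrite Nat.add_succ_r. change (Sp (S (N + d))%nat) with (Sp (N + d)%nat + pos (S (N + d))%nat).
        rewrite IHd, (Hst (S (N + d))) by lia. ring. }
    assert (Hpos : forall m, 0 <= pos m) by (intros; apply Rmax_l).
    assert (Hm : forall n d, Sp n <= Sp (n + d)%nat).
    { intros n d; induction d; [rewrite Nat.add_0_r; lra|].
      rewrite Nat.add_succ_r. unfold Sp in *; simpl. specialize (Hpos (S (n + d))); lra. }
    assert (Hub : forall n, Sp n <= Sp N + C).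
    { intros n. pose proof (Hm n N). rewrite Nat.add_comm, Hd in H.
      pose proof (Pf_bnd C y HC (S (N + n))). pose proof (Pf_bnd C y HC (S N)). lra. }
    destruct (growing_cv Sp) as [lp Hlp].
    + intros n. unfold Sp; simpl. specialize (Hpos (S n)); lra.
    + exists (Sp N + C). intros r [i ->]. apply Hub.
    + exists (lp + lp - ly). unfold infinite_sum.
      apply (Un_cv_ext (fun i => Sp i + Sp i - sum_f_R0 y i)).
      * intros n; symmetry; unfold Sp; induction n; simpl; [|rewrite IHn]; rewrite abs_pos; unfold pos; ring.
      * apply (CV_minus (fun i => Sp i + Sp i)); [apply CV_plus|]; auto.
Qed.

Lemma Pf_inf C y : 0 < C -> cond_convergent y ->
  forall m, exists j, (m <= j)%nat /\ cnd C y j (Pf C y j) = true.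
Proof.
  intros HC Hy m. apply NNPP. intros Hno.
  assert (Hf : forall j, (m <= j)%nat -> cnd C y j (Pf C y j) = false).
  { intros j Hj. destruct (cnd C y j (Pf C y j)) eqn:E; auto. exfalso; apply Hno; eauto. }
  assert (Hc : forall d, Pf C y (m + d) = Pf C y m).
  { induction d; [rewrite Nat.add_0_r; auto|]. rewrite Nat.add_succ_r. simpl.
    rewrite Hf by lia. rewrite IHd; ring. }
  pose proof (Pf_bnd C y HC m).
  destruct (Pf_lim C y HC Hy (C - Pf C y m)) as [N HN]; [lra|].
  specialize (HN (m + N)%nat ltac:(lia)). rewrite Hc in HN. unfold Rdist in HN.
  rewrite Rabs_left1 in HN by lra. lra.
Qed.

Lemma sum_minus f g n : sum_f_R0 (fun m => f m - g m) n = sum_f_R0 f n - sum_f_R0 g n.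
Proof. induction n; simpl; [ring|]. rewrite IHn; ring. Qed.

Theorem mainTheorem1 (x : nat -> R) (hx : cond_convergent x) (a b : R) (hab : a < b) :
  exists k : nat -> nat,
    strictly_increasing k /\
    abs_convergent (fun n => x (k n)) /\
    (forall t : R, a <= t <= b -> achievement_set (fun n => x (k n)) t).
Proof.
  set (C := Rabs a + Rabs b + 1).
  assert (HC : 0 < C) by (unfold C; pose proof (Rabs_pos a); pose proof (Rabs_pos b); lra).
  set (xn := fun n => - x n).
  assert (hxn : cond_convergent xn).
  { destruct hx as [[l Hl] Hna]. split.
    - exists (- l). intros eps He. destruct (Hl eps He) as [N HN]. exists N. intros n Hn.
      assert (E : forall n, sum_f_R0 xn n = - sum_f_R0 x n)
        by (induction n0; simpl; [|rewrite IHn0]; unfold xn; ring).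
      rewrite E. unfold Rdist in *.
      replace (- sum_f_R0 x n - - l) with (- (sum_f_R0 x n - l)) by ring.
      rewrite Rabs_Ropp; auto.
    - intros [l2 Hl2]. apply Hna. exists l2. revert Hl2. apply isum_ext.
      intros; unfold xn; apply Rabs_Ropp. }
  set (P := Pf C x). set (N := Pf C xn).
  set (cp := fun m => cnd C x m (P m)). set (cn := fun m => cnd C xn m (N m)).
  set (pp := fun m => if cp m then x m else 0). set (nn := fun m => if cn m then xn m else 0).
  set (I := fun m => orb (cp m) (cn m)).
  destruct (enum I) as [k [Hk Htr]].
  { intros m. destruct (Pf_inf C x HC hx m) as [j [Hj E]]. exists j; split; auto.
    unfold I, cp; fold P in E; rewrite E; auto. }
  exists k. split; [exact Hk|].
  assert (Excl : forall m, cp m = true -> cn m = true -> False).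
  { intros m E1 E2. apply cnd_true in E1. apply cnd_true in E2. unfold xn in E2. lra. }
  set (w := fun m => pp m + nn m).
  assert (Hpp : forall m, 0 <= pp m /\ pp m <= C - P (S m)).
  { intros m. unfold pp. pose proof (Pf_bnd C x HC (S m)). fold P in H.
    destruct (cp m) eqn:E.
    - split; [apply cnd_true in E; lra|]. apply Pf_tail; exact E.
    - lra. }
  assert (Hnn : forall m, 0 <= nn m /\ nn m <= C - N (S m)).
  { intros m. unfold nn. pose proof (Pf_bnd C xn HC (S m)). fold N in H.
    destruct (cn m) eqn:E.
    - split; [apply cnd_true in E; lra|]. apply Pf_tail; exact E.
    - lra. }
  assert (SP : forall m, P (S m) = P m + pp m) by reflexivity.
  assert (SN : forall m, N (S m) = N m + nn m) by reflexivity.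
  assert (HPl : Un_cv P C) by (apply Pf_lim; auto).
  assert (HNl : Un_cv N C) by (apply Pf_lim; auto).
  assert (Sw : forall n, sum_f_R0 w n = P (S n) + N (S n)).
  { induction n.
    - change (sum_f_R0 w 0) with (w 0%nat). unfold w. rewrite (SP 0%nat), (SN 0%nat).
      change (P 0%nat) with 0; change (N 0%nat) with 0. ring.
    - change (sum_f_R0 w (S n)) with (sum_f_R0 w n + w (S n)).
      rewrite IHn. unfold w. rewrite (SP (S n)), (SN (S n)). ring. }
  split.
  - exists (C + C). apply (Htr (fun m => Rabs (x m))).
    apply (isum_ext w).
    { intros m. unfold w, I, pp, nn, xn. destruct (cp m) eqn:E1; destruct (cn m) eqn:E2;
      simpl; [exfalso; eapply Excl; eauto | | |].
      - apply cnd_true in E1. rewrite Rabs_right; lra.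
      - apply cnd_true in E2. unfold xn in E2. rewrite Rabs_left1; lra.
      - ring. }
    unfold infinite_sum. apply (Un_cv_ext (fun n => P (S n) + N (S n))); [intros; rewrite Sw; auto|].
    apply CV_plus; apply cv_shift; auto.
  - intros t Ht.
    set (Rt := fun m => (C - P m) + (C - N m)).
    destruct (greedy w Rt (t + C)) as [B HB].
    + intros m; unfold w; pose proof (Hpp m); pose proof (Hnn m); lra.
    + intros m; unfold Rt, w; rewrite SP, SN; ring.
    + replace 0 with ((C - C) + (C - C)) by ring. unfold Rt.
      apply CV_plus; apply CV_minus; auto; apply cv_const.
    + intros m; unfold Rt, w; pose proof (Hpp m); pose proof (Hnn m); lra.
    + unfold Rt. change (P 0%nat) with 0; change (N 0%nat) with 0.
      pose proof (Rle_abs b) as Hb1. pose proof (Rle_abs (-a)) as Ha1. rewrite Rabs_Ropp in Ha1. pose proof (Rabs_pos a); pose proof (Rabs_pos b). unfold C. lra.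

    + set (A := fun m => if cn m then negb (B m) else B m).
      exists (fun n => A (k n)).
      apply (Htr (fun m => if A m then x m else 0)).
      apply (isum_ext (fun m => (if B m then w m else 0) - nn m)).
      { intros m. unfold A, w, I, pp, nn, xn. destruct (cp m) eqn:E1; destruct (cn m) eqn:E2;
        simpl; [exfalso; eapply Excl; eauto | | |]; destruct (B m); simpl; ring. }
      unfold infinite_sum.
      apply (Un_cv_ext (fun n => sum_f_R0 (fun m => if B m then w m else 0) n - N (S n))).
      { intros n. rewrite sum_minus. f_equal. clear -SN.
        induction n; simpl sum_f_R0; [|rewrite <- IHn]; rewrite SN; [|reflexivity].
        change (N 0%nat) with 0; ring. }
      replace t with ((t + C) - C) by ring.
      apply CV_minus; [exact HB| apply cv_shift; auto].
Qed.
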